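(* Let $K$ be the field of fractions of a complete discrete valuation ring $\mathcal{O}$, and suppose $K$ has characteristic $3$ (the residue field may be infinite). In the coefficient-choosing game of degree $d = 3$ over $K$, whichever player makes the last move has a winning strategy.
   Context: The coefficient-choosing game of degree $d$ over $K$: Nora and Wanda alternately choose coefficients of $f(x) = a_d x^d + \cdots + a_0$; on each move the current player picks a not-yet-chosen coefficient and assigns it a value in $K$, subject to $a_d \neq 0$, $a_0 \neq 0$. After all $d+1$ coefficients are chosen, Wanda wins if $f$ has a root in $K$, and Nora wins otherwise. Who moves first is fixed in advance. *)

(* Defs.v *)
From HB Require Import structures.
From mathcomp Require Import all_boot all_order all_algebra.
Set Implicit Arguments. Unset Strict Implicit. Unset Printing Implicit Defensive.
Import Order.TTheory GRing.Theory Num.Theory.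
Local Open Scope ring_scope.

(* [vge v x N] : "v(x) >= N", with the convention v(0) = +oo. *)
Definition vge (K : fieldType) (v : K -> int) (x : K) (N : int) : Prop :=
  x = 0 \/ (N <= v x)%R.

(* v is a normalized discrete valuation on K (value on 0 irrelevant, = +oo
   by convention):  v(xy) = v x + v y,  v(x+y) >= min(v x, v y),
   and v takes the value 1 (hence the value group is Z). *)
Definition discrete_valuation (K : fieldType) (v : K -> int) : Prop :=
  [/\ (forall x y : K, x != 0 -> y != 0 -> v (x * y) = v x + v y),
      (forall x y : K, x != 0 -> y != 0 -> x + y != 0 ->
          (Order.min (v x) (v y) <= v (x + y))%R)
    & (exists pi : K, pi != 0 /\ v pi = 1)].

Definition v_complete (K : fieldType) (v : K -> int) : Prop :=
  forall u : nat -> K,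
    (forall N : int, exists M : nat, forall m n : nat,
        (M <= m)%N -> (M <= n)%N -> vge v (u m - u n) N) ->
    exists l : K, forall N : int, exists M : nat, forall n : nat,
        (M <= n)%N -> vge v (u n - l) N.

Definition val_ring (K : fieldType) (v : K -> int) : pred K :=
  fun x => (x == 0) || (0 <= v x)%R.

Inductive player := Nora | Wanda.

Definition other (p : player) : player :=
  match p with Nora => Wanda | Wanda => Nora end.

Definition player_eqb (p q : player) : bool :=
  match p, q with Nora, Nora | Wanda, Wanda => true | _, _ => false end.

(* a position: for each index i <= d, the coefficient a_i if already chosen *)
Definition position (K : fieldType) (d : nat) := 'I_d.+1 -> option K.

Definition start_pos (K : fieldType) (d : nat) : position K d := fun _ => None.

Definition legal_move (K : fieldType) (d : nat) (s : position K d)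
    (i : 'I_d.+1) (c : K) : Prop :=
  s i = None /\ ((nat_of_ord i = 0%N \/ nat_of_ord i = d) -> c != 0).

Definition play_move (K : fieldType) (d : nat) (s : position K d)
    (i : 'I_d.+1) (c : K) : position K d :=
  fun j => if j == i then Some c else s j.

Definition pos_poly (K : fieldType) (d : nat) (s : position K d) : {poly K} :=
  \poly_(i < d.+1) odflt 0 (s (inord i)).

Definition wins_outcome (K : fieldType) (d : nat) (W : player)
    (s : position K d) : Prop :=
  match W with
  | Wanda => exists x : K, root (pos_poly s) x
  | Nora => ~ (exists x : K, root (pos_poly s) x)
  end.

(* [can_force W n turn s]: from position s, with n moves left and player
   [turn] to move, player W can force a win (finite game of fixed length,
   so this nested exists/forall is exactly "W has a winning strategy"). *)
Fixpoint can_force (K : fieldType) (d : nat) (W : player) (n : nat)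
    (turn : player) (s : position K d) : Prop :=
  match n with
  | 0%N => wins_outcome W s
  | n'.+1 =>
      if player_eqb turn W then
        exists (i : 'I_d.+1) (c : K),
          legal_move s i c /\ can_force W n' (other turn) (play_move s i c)
      else
        forall (i : 'I_d.+1) (c : K),
          legal_move s i c -> can_force W n' (other turn) (play_move s i c)
  end.

Definition has_winning_strategy (K : fieldType) (d : nat) (W first : player)
    : Prop :=
  can_force W d.+1 first (@start_pos K d).

Definition last_mover (d : nat) (first : player) : player :=
  if odd d.+1 then first else other first.

(* Main.v *)
Require Import Defs.
From HB Require Import structures.
From mathcomp Require Import all_boot all_order all_algebra.
From mathcomp Require Import zify ring.
From Stdlib Require Import Classical.
Import Order.TTheory GRing.Theory Num.Theory.
Local Open Scope ring_scope.
Set Implicit Arguments. Unset Strict Implicit.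

Lemma v_one (K : fieldType) (v : K -> int) (Hv : discrete_valuation v) : v 1 = 0.
Proof. case: Hv => vm _ _. have := vm 1 1 (oner_neq0 _) (oner_neq0 _). rewrite mulr1. lia. Qed.

Lemma v_opp (K : fieldType) (v : K -> int) (Hv : discrete_valuation v) (x : K) :
  x != 0 -> v (- x) = v x.
Proof.
move=> hx. have h1 := v_one Hv. case: Hv => vm _ _.
have n1 : (-1 : K) != 0 by rewrite oppr_eq0 oner_neq0.
have := vm (-1) (-1) n1 n1. rewrite mulrNN mulr1 h1 => e.
rewrite -mulN1r vm //. lia.
Qed.

Lemma vge_mul (K : fieldType) (v : K -> int) (Hv : discrete_valuation v) x y N M :
  vge v x N -> vge v y M -> vge v (x * y) (N + M).
Proof.
case: Hv => vm _ _.
case=> [->|hx]; first by left; rewrite mul0r.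
case=> [->|hy]; first by left; rewrite mulr0.
have [->|x0] := eqVneq x 0; first by left; rewrite mul0r.
have [->|y0] := eqVneq y 0; first by left; rewrite mulr0.
right. rewrite vm //. lia.
Qed.

Lemma vge_add (K : fieldType) (v : K -> int) (Hv : discrete_valuation v) x y N :
  vge v x N -> vge v y N -> vge v (x + y) N.
Proof.
case: Hv => _ va _.
case=> [->|hx]; first by rewrite add0r.
case=> [->|hy]; first by rewrite addr0; right.
have [->|x0] := eqVneq x 0; first by rewrite add0r; right.
have [->|y0] := eqVneq y 0; first by rewrite addr0; right.
have [->|s0] := eqVneq (x + y) 0; first by left.
right. have := va x y x0 y0 s0. lia.
Qed.

Lemma vge_le (K : fieldType) (v : K -> int) x N M :
  vge v x N -> M <= N -> vge v x M.
Proof. case=> [->|h] hm; [by left | right; lia]. Qed.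

Lemma vge_self (K : fieldType) (v : K -> int) x : vge v x (v x).
Proof. by right. Qed.

Lemma dom (K : fieldType) (v : K -> int) (Hv : discrete_valuation v) s t N :
  s != 0 -> vge v t N -> v s < N -> s + t != 0.
Proof.
move=> s0 [->|ht] hs; first by rewrite addr0.
apply/negP; rewrite addr_eq0 => /eqP e.
have t0 : t != 0 by apply: contra s0; rewrite e => /eqP ->; rewrite oppr0.
have : v s = v (- t) by rewrite e.
rewrite (v_opp Hv) //. lia.
Qed.

Lemma v_exp (K : fieldType) (v : K -> int) (Hv : discrete_valuation v) x n :
  x != 0 -> v (x ^+ n) = n%:Z * v x.
Proof.
move=> x0. have h1 := v_one Hv. case: Hv => vm _ _.
elim: n => [|n IH]; first by rewrite expr0 h1 mul0r.
rewrite exprS vm ?expf_neq0 // IH intS mulrDl mul1r //.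
Qed.

Lemma v_inv (K : fieldType) (v : K -> int) (Hv : discrete_valuation v) x :
  x != 0 -> v (x^-1) = - v x.
Proof.
move=> x0. have h1 := v_one Hv. case: Hv => vm _ _.
have := vm x x^-1 x0 (invr_neq0 x0). rewrite mulfV // h1. lia.
Qed.

Ltac nz := repeat first [done | apply: mulf_neq0 | apply: expf_neq0 | rewrite invr_eq0 | rewrite oppr_eq0].

Lemma vge_pi (K : fieldType) (v : K -> int) (pi : K) : v pi = 1 -> vge v pi 1.
Proof. by move=> h; right; rewrite h. Qed.

Lemma eisen (K : fieldType) (v : K -> int) (Hv : discrete_valuation v) (pi : K)
  (pi0 : pi != 0) (vpi : v pi = 1) (t : K) : t ^+ 3 + pi * t + pi != 0.
Proof.
have [->|t0] := eqVneq t 0; first by rewrite expr0n /= mulr0 !add0r.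
have [h|h] := leP 1 (v t).
  have -> : t^+3 + pi * t + pi = pi + (t^+3 + pi * t) by ring.
  apply: (dom Hv (N := 2)) => //; last by rewrite vpi.
  apply: vge_add => //.
    rewrite !exprS expr0 mulr1.
    apply: (vge_le (N := 1 + (1 + 1))); last by [].
    by do 2 (apply: vge_mul => //; first by right); right.
  by apply: (vge_mul Hv (N := 1) (M := 1)); [apply: vge_pi | right].
rewrite -addrA; apply: (dom Hv (N := 1 + v t)).
- by nz.
- apply: vge_add => //.
    by apply: vge_mul => //; [apply: vge_pi | apply: vge_self].
  by apply: (vge_le (vge_pi vpi)); lia.
- rewrite (v_exp Hv) //. lia.
Qed.

Lemma core (K : fieldType) (v : K -> int) (Hv : discrete_valuation v) (pi : K)
  (pi0 : pi != 0) (vpi : v pi = 1) (g w : K) :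
  vge v g 1 -> 1 + g * w + pi * w ^+ 3 != 0.
Proof.
move=> hg. have h1 := v_one Hv.
have [->|w0] := eqVneq w 0; first by rewrite expr0n /= !mulr0 !addr0 oner_neq0.
have vm : forall x y : K, x != 0 -> y != 0 -> v (x * y) = v x + v y by case: Hv.
have [h|h] := leP 0 (v w).
  rewrite -addrA. apply: (dom Hv (N := 1)); [exact: oner_neq0| |by rewrite h1].
  apply: vge_add => //.
    by apply: (vge_le (vge_mul Hv hg (vge_self v w))); lia.
  apply: (vge_le (vge_mul Hv (vge_pi vpi) (vge_self v (w ^+ 3)))).
  rewrite (v_exp Hv) //; lia.
have -> : 1 + g * w + pi * w ^+ 3 = pi * w ^+ 3 + (1 + g * w) by ring.
apply: (dom Hv (N := 1 + v w)).
- by nz.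
- apply: vge_add => //.
    by right; rewrite h1; lia.
  exact: (vge_mul Hv hg (vge_self v w)).
- rewrite vm; [|by []|by nz]. rewrite (v_exp Hv) // vpi. lia.
Qed.

Lemma L1 (K : fieldType) (v : K -> int) (Hv : discrete_valuation v) (pi : K)
  (pi0 : pi != 0) (vpi : v pi = 1) (h3 : 3%:R = 0 :> K) (c0 c3 : K) :
  c0 != 0 -> c3 != 0 -> exists c1, forall x, c0 + c1 * x + c3 * x ^+ 3 != 0.
Proof.
move=> c00 c30.
case: (classic (exists u, u ^+ 3 = - c0 / c3)) => [[u hu]|nu].
  have u0 : u != 0.
    apply/eqP=> u0; move: hu; rewrite u0 expr0n /= => /esym/eqP.
    by rewrite mulf_eq0 oppr_eq0 invr_eq0 (negbTE c00) (negbTE c30).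
  exists (c3 * u ^+ 2 * pi) => x.
  have ec0 : c0 = - (c3 * u ^+ 3) by rewrite hu; field; do ?[apply/andP; split].
  have [t ->] : exists t, x = u * (1 + t) by exists (x / u - 1); field; do ?[apply/andP; split].
  have -> : c0 + c3 * u ^+ 2 * pi * (u * (1 + t)) + c3 * (u * (1 + t)) ^+ 3
     = c3 * u ^+ 3 * (t ^+ 3 + pi * t + pi) + 3%:R * (c3 * u ^+ 3 * (t ^+ 2 + t)).
    by rewrite ec0; ring.
  rewrite h3 mul0r addr0; apply: mulf_neq0; first by nz.
  exact: (eisen Hv).
exists 0 => x; rewrite mul0r addr0.
apply/negP => /eqP e; apply: nu; exists x.
have e' : c3 * x ^+ 3 = - c0 by apply/eqP; rewrite -addr_eq0 addrC; apply/eqP.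
by rewrite -e'; field; do ?[apply/andP; split].
Qed.

Lemma pick_n (K : fieldType) (v : K -> int) (Hv : discrete_valuation v) (pi : K)
  (pi0 : pi != 0) (vpi : v pi = 1) (b : K) :
  exists n, vge v (b * pi ^+ n) 1 /\ vge v (b * pi ^+ n * pi ^+ n) 0.
Proof.
have [->|b0] := eqVneq b 0; first by exists 0%N; rewrite !mul0r; split; left.
have vm : forall x y : K, x != 0 -> y != 0 -> v (x * y) = v x + v y by case: Hv.
exists (absz (v b)).+1; split; right.
  rewrite vm; [|by []|by nz]. rewrite (v_exp Hv) // vpi; lia.
rewrite vm; [|by nz|by nz]. rewrite vm; [|by []|by nz]. rewrite (v_exp Hv) // vpi; lia.
Qed.

Lemma L2 (K : fieldType) (v : K -> int) (Hv : discrete_valuation v) (pi : K)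
  (pi0 : pi != 0) (vpi : v pi = 1) (c1 c3 : K) :
  c3 != 0 -> exists c0, c0 != 0 /\ forall x, c0 + c1 * x + c3 * x ^+ 3 != 0.
Proof.
move=> c30.
have [n [_ hn]] := pick_n Hv pi0 vpi (c1 / c3).
move: hn (expf_neq0 n pi0); move: (pi ^+ n) => r hn r0.
exists (c3 / (pi * r ^+ 3)); split.
  by nz.
move=> x; apply/negP => /eqP e.
have := core Hv pi0 vpi (x * r) (vge_mul Hv (vge_pi vpi) hn).
have -> : 1 + pi * (c1 / c3 * r * r) * (x * r) + pi * (x * r) ^+ 3
   = (c3 / (pi * r ^+ 3) + c1 * x + c3 * x ^+ 3) * (pi * r ^+ 3 / c3) by field; do ?[apply/andP; split].
by rewrite e mul0r eqxx.
Qed.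

Lemma L3 (K : fieldType) (v : K -> int) (Hv : discrete_valuation v) (pi : K)
  (pi0 : pi != 0) (vpi : v pi = 1) (c0 c1 : K) :
  c0 != 0 -> exists c3, c3 != 0 /\ forall x, c0 + c1 * x + c3 * x ^+ 3 != 0.
Proof.
move=> c00.
have [n [hn _]] := pick_n Hv pi0 vpi (c1 / c0).
move: hn (expf_neq0 n pi0); move: (pi ^+ n) => r hn r0.
exists (c0 * pi / r ^+ 3); split.
  by nz.
move=> x; apply/negP => /eqP e.
have := core Hv pi0 vpi (x / r) hn.
have -> : 1 + c1 / c0 * r * (x / r) + pi * (x / r) ^+ 3
   = (c0 + c1 * x + c0 * pi / r ^+ 3 * x ^+ 3) / c0 by field; do ?[apply/andP; split].
by rewrite e mul0r eqxx.
Qed.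

Lemma rev_lem (K : fieldType) (A C D : K) :
  C != 0 -> (forall y, A + D * y + C * y ^+ 3 != 0) ->
  forall x, C + D * x ^+ 2 + A * x ^+ 3 != 0.
Proof.
move=> C0 H x.
have [->|x0] := eqVneq x 0; first by rewrite !expr0n /= !mulr0 !addr0.
apply/negP => /eqP e.
have := H x^-1.
have -> : A + D * x^-1 + C * x^-1 ^+ 3 = (C + D * x ^+ 2 + A * x ^+ 3) / x ^+ 3 by field; do ?[apply/andP; split].
by rewrite e mul0r eqxx.
Qed.

Lemma quad (K : fieldType) (v : K -> int) (Hv : discrete_valuation v) (pi : K)
  (pi0 : pi != 0) (vpi : v pi = 1) (h3 : 3%:R = 0 :> K) (a b c : K) :
  a != 0 \/ c != 0 -> exists x, x != 0 /\ a * x ^+ 2 + b * x + c != 0.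
Proof.
move=> hac.
have [q1|q1] := eqVneq (a + b + c) 0; last first.
  by exists 1; rewrite oner_neq0 expr1n !mulr1.
have [qm|qm] := eqVneq (a - b + c) 0; last first.
  exists (-1); rewrite oppr_eq0 oner_neq0; split => //.
  by have -> : a * (-1) ^+ 2 + b * -1 + c = a - b + c by ring.
have eb : b = 0.
  have -> : b = 3%:R * b - ((a + b + c) - (a - b + c)) by ring.
  by rewrite h3 q1 qm mul0r subrr subr0.
have ec : c = - a by apply/eqP; rewrite -addr_eq0 addrC; apply/eqP; rewrite -q1 eb addr0.
have a0 : a != 0 by case: hac => //; rewrite ec oppr_eq0.
exists pi; split => //.
rewrite eb mul0r addr0 ec.
have -> : a * pi ^+ 2 + - a = a * (pi ^+ 2 - 1) by ring.
rewrite mulf_neq0 // subr_eq0; apply/eqP => e.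
have := v_exp Hv 2 pi0; rewrite e (v_one Hv) vpi. lia.
Qed.

Definition ok (K : fieldType) (s : position K 3) : Prop :=
  forall j cc, s j = Some cc -> (nat_of_ord j = 0%N \/ nat_of_ord j = 3%N) -> cc != 0.

Lemma ok_start (K : fieldType) : ok (@start_pos K 3).
Proof. by []. Qed.

Lemma ok_play (K : fieldType) (s : position K 3) i cc :
  ok s -> legal_move s i cc -> ok (play_move s i cc).
Proof.
move=> hs [_ hl] j c; rewrite /play_move.
have [->|_] := eqVneq j i; last exact: hs.
by case=> <-.
Qed.

Definition cf (K : fieldType) (s : position K 3) (j : nat) : K := odflt 0 (s (inord j)).

Lemma ev (K : fieldType) (s : position K 3) x :
  (pos_poly s).[x] = cf s 0 + cf s 1 * x + cf s 2 * x ^+ 2 + cf s 3 * x ^+ 3.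
Proof.
rewrite /pos_poly horner_poly !big_ord_recr big_ord0 /= add0r expr0 mulr1 expr1.
by [].
Qed.

Lemma eq_inord j k : (j < 4)%N -> (k < 4)%N -> (inord j == inord k :> 'I_4) = (j == k).
Proof. by move=> hj hk; rewrite -val_eqE /= !inordK. Qed.

Lemma pmv (K : fieldType) (s : position K 3) k cc j : (k < 4)%N -> (j < 4)%N ->
  cf (play_move s (inord k) cc) j = if j == k then cc else cf s j.
Proof. by move=> hk hj; rewrite /cf /play_move eq_inord //; case: (j == k). Qed.

Lemma endp (K : fieldType) (s : position K 3) i j :
  ok s -> (forall j, j != i -> s j <> None) -> (j < 4)%N -> (j = 0 \/ j = 3)%N ->
  inord j != i -> cf s j != 0.
Proof.
move=> hok hf hj hj03 hne; rewrite /cf.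
case E: (s (inord j)) => [a|]; last by case: (hf _ hne E).
by apply: (hok _ _ E); rewrite inordK.
Qed.

Lemma ord4 (i : 'I_4) : exists2 k, (k < 4)%N & i = inord k.
Proof. by exists (nat_of_ord i); rewrite ?inord_val. Qed.

Lemma wanda_final (K : fieldType) (v : K -> int) (Hv : discrete_valuation v) (pi : K)
  (pi0 : pi != 0) (vpi : v pi = 1) (h3 : 3%:R = 0 :> K) (s : position K 3) i :
  ok s -> s i = None -> (forall j, j != i -> s j <> None) ->
  exists cc, legal_move s i cc /\ exists x, root (pos_poly (play_move s i cc)) x.
Proof.
move=> hok hi hf.
have [k hk ik] := ord4 i; subst i.
have E j : (j < 4)%N -> (j = 0 \/ j = 3)%N -> j != k -> cf s j != 0.
  by move=> hj h03 hne; apply: (endp hok hf) => //; rewrite eq_inord.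
case: k hk hi hf E => [|[|[|[|k]]]] // _ hi hf E.
- have [x [x0 hq]] := quad (c := cf s 1) Hv pi0 vpi h3 (cf s 2) (or_introl (E 3%N isT (or_intror erefl) isT)).
  exists (- (x * (cf s 3 * x ^+ 2 + cf s 2 * x + cf s 1))); split.
    split => // _; rewrite oppr_eq0; exact: mulf_neq0.
  exists x; rewrite /root ev !pmv //=; apply/eqP; ring.
- exists (- (cf s 0 + cf s 2 + cf s 3)); split.
    by split => //; rewrite inordK //; case.
  exists 1; rewrite /root ev !pmv //=; apply/eqP; ring.
- exists (- (cf s 0 + cf s 1 + cf s 3)); split.
    by split => //; rewrite inordK //; case.
  exists 1; rewrite /root ev !pmv //=; apply/eqP; ring.
- have [x [x0 hq]] := quad (a := cf s 2) Hv pi0 vpi h3 (cf s 1) (or_intror (E 0%N isT (or_introl erefl) isT)).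
  exists (- ((cf s 2 * x ^+ 2 + cf s 1 * x + cf s 0) / x ^+ 3)); split.
    split => // _; rewrite oppr_eq0; apply: mulf_neq0 => //; rewrite invr_eq0; exact: expf_neq0.
  exists x; rewrite /root ev !pmv //=; apply/eqP; field; do ?[apply/andP; split]; exact: x0.
Qed.

Lemma nora_final (K : fieldType) (v : K -> int) (Hv : discrete_valuation v) (pi : K)
  (pi0 : pi != 0) (vpi : v pi = 1) (h3 : 3%:R = 0 :> K) (s : position K 3) i :
  ok s -> s i = None -> (forall j, j != i -> s j <> None) ->
  (s (inord 2) = Some 0 \/ s (inord 1) = Some 0) ->
  exists cc, legal_move s i cc /\ ~ exists x, root (pos_poly (play_move s i cc)) x.
Proof.
move=> hok hi hf hz.
have [k hk ik] := ord4 i; subst i.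
have E j : (j < 4)%N -> (j = 0 \/ j = 3)%N -> j != k -> cf s j != 0.
  by move=> hj h03 hne; apply: (endp hok hf) => //; rewrite eq_inord.
have leg cc : s (inord k) = None -> cc != 0 -> legal_move s (inord k) cc by [].
case: hz => hz.
- have z2 : cf s 2 = 0 by rewrite /cf hz.
  case: k hk hi hf E leg => [|[|[|[|k]]]] // _ hi hf E leg.
  + have [c0 [c00 H]] := L2 Hv pi0 vpi (cf s 1) (E 3%N isT (or_intror erefl) isT).
    exists c0; split; first exact: leg.
    case=> x; rewrite /root ev !pmv //= z2 mul0r addr0; exact/negP.
  + have [c1 H] := L1 Hv pi0 vpi h3 (E 0%N isT (or_introl erefl) isT)
                     (E 3%N isT (or_intror erefl) isT).
    exists c1; split; first by split => //; rewrite inordK //; case.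
    case=> x; rewrite /root ev !pmv //= z2 mul0r addr0; exact/negP.
  + by rewrite hi in hz.
  + have [c3 [c30 H]] := L3 Hv pi0 vpi (cf s 1) (E 0%N isT (or_introl erefl) isT).
    exists c3; split; first exact: leg.
    case=> x; rewrite /root ev !pmv //= z2 mul0r addr0; exact/negP.
- have z1 : cf s 1 = 0 by rewrite /cf hz.
  case: k hk hi hf E leg => [|[|[|[|k]]]] // _ hi hf E leg.
  + have [c3 [c30 H]] := L3 Hv pi0 vpi (cf s 2) (E 3%N isT (or_intror erefl) isT).
    exists c3; split; first exact: leg.
    case=> x; rewrite /root ev !pmv //= z1 mul0r addr0; apply/negP; exact: (rev_lem c30 H x).
  + by rewrite hi in hz.
  + have [c1 H] := L1 Hv pi0 vpi h3 (E 3%N isT (or_intror erefl) isT)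
                     (E 0%N isT (or_introl erefl) isT).
    exists c1; split; first by split => //; rewrite inordK //; case.
    case=> x; rewrite /root ev !pmv //= z1 mul0r addr0.
    apply/negP; exact: (rev_lem (E 0%N isT (or_introl erefl) isT) H x).
  + have [c0 [c00 H]] := L2 Hv pi0 vpi (cf s 2) (E 0%N isT (or_introl erefl) isT).
    exists c0; split; first exact: leg.
    case=> x; rewrite /root ev !pmv //= z1 mul0r addr0.
    apply/negP; exact: (rev_lem (E 0%N isT (or_introl erefl) isT) H x).
Qed.

Lemma three (K : fieldType) i1 c1 i2 c2 i3 (c3 : K) :
  legal_move (@start_pos K 3) i1 c1 ->
  legal_move (play_move (@start_pos K 3) i1 c1) i2 c2 ->
  legal_move (play_move (play_move (@start_pos K 3) i1 c1) i2 c2) i3 c3 ->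
  exists i, play_move (play_move (play_move (@start_pos K 3) i1 c1) i2 c2) i3 c3 i = None
    /\ forall j, j != i ->
       play_move (play_move (play_move (@start_pos K 3) i1 c1) i2 c2) i3 c3 j <> None.
Proof.
move=> _ [H2 _] [H3 _]; move: H2 H3; rewrite /play_move.
have [//|d21] := eqVneq i2 i1 => _.
have [//|d32] := eqVneq i3 i2.
have [//|d31] := eqVneq i3 i1 => _.
have n21 : (nat_of_ord i2 != nat_of_ord i1)%N by rewrite val_eqE.
have n32 : (nat_of_ord i3 != nat_of_ord i2)%N by rewrite val_eqE.
have n31 : (nat_of_ord i3 != nat_of_ord i1)%N by rewrite val_eqE.
have b1 := ltn_ord i1; have b2 := ltn_ord i2; have b3 := ltn_ord i3.
have hm : (6 - (i1 + i2 + i3) < 4)%N by lia.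
exists (inord (6 - (i1 + i2 + i3))); split.
  rewrite -!val_eqE /= !inordK //.
  have -> : (6 - (i1 + i2 + i3) == i3)%N = false by apply/eqP; lia.
  have -> : (6 - (i1 + i2 + i3) == i2)%N = false by apply/eqP; lia.
  by have -> : (6 - (i1 + i2 + i3) == i1)%N = false by apply/eqP; lia.
move=> j hj.
have [//|e3] := eqVneq j i3.
have [//|e2] := eqVneq j i2.
have [//|e1] := eqVneq j i1.
move: hj; rewrite -val_eqE /= inordK //.
have m3 : (nat_of_ord j != nat_of_ord i3)%N by rewrite val_eqE.
have m2 : (nat_of_ord j != nat_of_ord i2)%N by rewrite val_eqE.
have m1 : (nat_of_ord j != nat_of_ord i1)%N by rewrite val_eqE.
have bj := ltn_ord j.
move=> /eqP; lia.
Qed.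

Unset Implicit Arguments.
Theorem lemma14 (K : fieldType) (v : K -> int)
    (Hv : discrete_valuation v) (Hcomplete : v_complete v)
    (Hchar : 3%N \in [pchar K]) (first : player) :
  has_winning_strategy K 3 (last_mover 3 first) first.
Proof.
have [pi [pi0 vpi]] : exists pi : K, pi != 0 /\ v pi = 1 by case: Hv.
have h3 : 3%:R = 0 :> K := pcharf0 Hchar.
case: first; rewrite /has_winning_strategy /last_mover /=.
- move=> i1 c1 h1.
  pose i2 : 'I_4 := if i1 == inord 0 then inord 1 else inord 0.
  have d : i2 != i1.
    rewrite /i2; have [e|ne] := eqVneq i1 (inord 0); first by rewrite e eq_inord.
    by rewrite eq_sym.
  have h2 : legal_move (play_move (@start_pos K 3) i1 c1) i2 1.
    by split; [rewrite /play_move (negbTE d) | move=> _; exact: oner_neq0].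
  exists i2, 1; split => // i3 c3 h3'.
  have [i [hi hf]] := three h1 h2 h3'.
  exists i; apply: (wanda_final Hv pi0 vpi h3 _ hi hf).
  exact: ok_play (ok_play (ok_play (@ok_start K) h1) h2) h3'.
- move=> i1 c1 h1.
  pose i2 : 'I_4 := if i1 == inord 2 then inord 1 else inord 2.
  have d : i2 != i1.
    rewrite /i2; have [e|ne] := eqVneq i1 (inord 2); first by rewrite e eq_inord.
    by rewrite eq_sym.
  have i2v : nat_of_ord i2 = 1%N \/ nat_of_ord i2 = 2%N.
    by rewrite /i2; case: (i1 == inord 2); rewrite inordK //; [left|right].
  have h2 : legal_move (play_move (@start_pos K 3) i1 c1) i2 0.
    split; first by rewrite /play_move (negbTE d).
    by case: i2v => -> [].
  exists i2, 0; split => // i3 c3 h3'.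
  have [i [hi hf]] := three h1 h2 h3'.
  exists i; apply: (nora_final Hv pi0 vpi h3 _ hi hf).
    exact: ok_play (ok_play (ok_play (@ok_start K) h1) h2) h3'.
  have s3 : play_move (play_move (play_move (@start_pos K 3) i1 c1) i2 0) i3 c3 i2 = Some 0.
    rewrite /play_move; have [e|_] := eqVneq i2 i3; last by rewrite eqxx.
    by move: h3' => [+ _]; rewrite -e /play_move eqxx.
  move: s3; rewrite /i2; case: (i1 == inord 2) => s3; [right|left]; exact: s3.
Qed.
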